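(* Let $G$ be a torsion-free locally compact abelian group and let $G^{*}$ be its minimal divisible extension. Then $G_{op}\subseteq G^{*}_{op}$.
   Context: A subgroup $H$ of an abelian group $G$ is pure if $nH=H\cap nG$ for every positive integer $n$. For an LCA group $G$, $G_{op}$ denotes the intersection of all open pure subgroups of $G$. For an LCA group $G$, $G^{*}$ denotes the minimal divisible extension (divisible hull) of $G$, topologized as an LCA group containing $G$ as an open subgroup (as in Hewitt–Ross 4.18.h); for torsion-free $G$, $G^{*}$ is torsion-free. *)

(* Defs.v *)
From HB Require Import structures.
From mathcomp Require Import all_boot all_order all_algebra.
From mathcomp Require Import all_classical all_reals all_analysis.
Set Implicit Arguments. Unset Strict Implicit. Unset Printing Implicit Defensive.
Import GRing.Theory.
Local Open Scope classical_set_scope.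
Local Open Scope ring_scope.

Definition LCA (G : topologicalZmodType) : Prop :=
  hausdorff_space G /\ locally_compact [set: G].

Definition subgroup (G : zmodType) (H : set G) : Prop :=
  H 0 /\ (forall x y, H x -> H y -> H (x - y)).

Definition pure (G : zmodType) (H : set G) : Prop :=
  subgroup H /\
  forall n : nat, (0 < n)%N ->
    [set h *+ n | h in H] = H `&` [set g *+ n | g in [set: G]].

Definition Gop (G : topologicalZmodType) : set G :=
  [set x | forall H : set G, open H -> pure H -> H x].
Arguments Gop G _ : clear implicits.

Definition torsion_free (G : zmodType) : Prop :=
  forall (x : G) (n : nat), (0 < n)%N -> x *+ n = 0 -> x = 0.

Definition divisible_set (G : zmodType) (D : set G) : Prop :=
  forall x n, (0 < n)%N -> D x -> exists2 y, D y & y *+ n = x.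

Definition divisible (G : zmodType) : Prop := divisible_set [set: G].

Definition minimal_divisible_extension (G Gs : topologicalZmodType)
  (iota : G -> Gs) : Prop :=
  LCA Gs /\
  (forall x y, iota (x + y) = iota x + iota y) /\
  injective iota /\
  continuous iota /\ (forall U : set G, open U -> open (iota @` U)) /\
  divisible Gs /\
  (forall D : set Gs, subgroup D -> divisible_set D ->
        iota @` [set: G] `<=` D -> D = [set: Gs]).

(* Main.v *)
Require Import Defs.
From HB Require Import structures.
From mathcomp Require Import all_boot all_order all_algebra.
From mathcomp Require Import all_classical all_reals all_analysis.
From Stdlib Require Import Classical_Prop.
Set Implicit Arguments. Unset Strict Implicit. Unset Printing Implicit Defensive.
Import GRing.Theory.
Local Open Scope classical_set_scope.
Local Open Scope ring_scope.

Section Aux.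
Variable V : zmodType.
Implicit Types (S : set V).

Lemma sg0 S : subgroup S -> S 0. Proof. by case. Qed.
Lemma sgB S x y : subgroup S -> S x -> S y -> S (x - y). Proof. by case=> _; apply. Qed.
Lemma sgN S x : subgroup S -> S x -> S (- x).
Proof. by move=> h hx; rewrite -sub0r; apply: sgB => //; apply: sg0. Qed.
Lemma sgD S x y : subgroup S -> S x -> S y -> S (x + y).
Proof. by move=> h hx hy; rewrite -[y]opprK; apply: sgB => //; apply: sgN. Qed.
Lemma sgMn S x n : subgroup S -> S x -> S (x *+ n).
Proof. by move=> h hx; elim: n => [|n IH]; [rewrite mulr0n; apply: sg0|rewrite mulrS; apply: sgD]. Qed.

Definition tor (z : V) := exists2 n, (0 < n)%N & z *+ n = 0.

Lemma tor0 : tor 0. Proof. by exists 1%N => //; rewrite mul0rn. Qed.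
Lemma torB x y : tor x -> tor y -> tor (x - y).
Proof.
move=> [a a0 ha] [b b0 hb]; exists (a * b)%N; first by rewrite muln_gt0 a0.
by rewrite mulrnBl mulrnA ha mul0rn mulnC mulrnA hb mul0rn subr0.
Qed.
Lemma torMn x n : tor x -> tor (x *+ n).
Proof. by move=> [a a0 ha]; exists a => //; rewrite -mulrnA mulnC mulrnA ha mul0rn. Qed.

End Aux.
Section TF.
Variable V : zmodType.
Variable A : set V.
Hypothesis Atf : forall a, A a -> tor a -> a = 0.
Hypothesis Asg : subgroup A.
Hypothesis Vdiv : divisible V.
Hypothesis Amin : forall D, subgroup D -> divisible_set D -> A `<=` D -> D = setT.

Definition P2 (S : set V) := [/\ subgroup S, A `<=` S & forall z, S z -> tor z -> z = 0].
Definition P (S : set V) := S = set0 \/ P2 S.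

Lemma exM : exists M, P2 M /\ forall B, M `<` B -> ~ P B.
Proof.
have [|M [PM maxM]] := @Zorn_bigcup V P.
  move=> F FP tot.
  have PX X z : F X -> X z -> [/\ subgroup X, A `<=` X & forall z, X z -> tor z -> z = 0].
    by move=> FX Xz; have := FP X FX; rewrite /P /P2; case => // X0; rewrite X0 in Xz.
  case: (pselect (exists X, F X /\ X !=set0)) => [[X0 [FX0 [z0 Xz0]]]|nF]; last first.
    rewrite /P; left; apply/seteqP; split; last by move=> ?.
    move=> z [X FX Xz]; exfalso; apply: nF; exists X; split => //; by exists z.
  rewrite /P /P2; right; have [sX0 A0 tf0] := PX _ _ FX0 Xz0.
  split.
  - split; first by exists X0 => //; apply: sg0 sX0.
    move=> x y [X FX Xx] [Y FY Yy].
    case: (tot X Y FX FY) => [XY|YX].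
      have [sgY _ _] := PX _ _ FY Yy; exists Y => //; apply: sgB => //; exact: XY.
    have [sgX _ _] := PX _ _ FX Xx; exists X => //; apply: sgB => //; exact: YX.
  - by move=> a Aa; exists X0 => //; apply: A0.
  - by move=> z [X FX Xz]; have [_ _ h] := PX _ _ FX Xz; apply: h.
move: PM; rewrite /P /P2; case => [M0|PM]; last by exists M.
exfalso; apply: (maxM A); last by rewrite /P /P2; right; split.
rewrite M0; split; first by move=> ?.
by move=> /(_ 0) h; apply: h; apply: sg0.
Qed.


Lemma tfV : torsion_free V.
Proof.
have [M [[sgM AM tfM] maxM]] := exM.
pose S z := exists m s, [/\ M m, tor s & z = m + s].
have MS m : M m -> S m by move=> Mm; exists m, 0; split => //; [exact: tor0|rewrite addr0].
have TS s : tor s -> S s by move=> ts; exists 0, s; split => //; [exact: sg0|rewrite add0r].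
have sgS : subgroup S.
  split; first exact: MS (sg0 sgM).
  move=> x y [m [s [Mm ts ->]]] [m' [s' [Mm' ts' ->]]].
  exists (m - m'), (s - s'); split; [exact: sgB|exact: torB|].
  by rewrite opprD addrACA.
have pureP w p : prime p -> S (w *+ p) -> S w.
  move=> pp [m [s [Mm [k k0 hk] ews]]].
  have p0 : (0 < p)%N by exact: prime_gt0.
  have [s' _ hs'] := Vdiv p0 (I : setT s).
  have ts' : tor s'.
    by exists (p * k)%N; [rewrite muln_gt0 p0 | rewrite mulrnA hs' hk].
  pose w' := w - s'.
  have hw' : w' *+ p = m by rewrite /w' mulrnBl hs' ews addrK.
  have Sw' : S w'.
    case: (pselect (M w')) => Mw'; first exact: MS.
    pose B z := exists m0 j, M m0 /\ z = m0 + w' *+ j.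
    have [u [[m0 [j [Mm0 ->]]] tu nu]] : exists u, [/\ B u, tor u & u <> 0].
      apply: NNPP => hn; apply: (maxM B).
        split; first by move=> z Mz; exists z, 0%N; rewrite mulr0n addr0.
        move=> eMB; apply: Mw'; apply: eMB; exists 0, 1%N; split; [exact: sg0|by rewrite add0r mulr1n].
      rewrite /P /P2; right; split.
      - split; first by exists 0, 0%N; split; [exact: sg0|by rewrite mulr0n addr0].
        move=> x y [m1 [j1 [Mm1 ->]]] [m2 [j2 [Mm2 ->]]].
        exists (m1 - m2 - m *+ j2), (j1 + p.-1 * j2)%N; split.
          by apply: sgB; [|apply: sgB|apply: sgMn].
        have e : w' *+ (p.-1 * j2) = m *+ j2 - w' *+ j2.
          rewrite -hw' -mulrnA; apply/eqP; rewrite eq_sym subr_eq -mulrnDr.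
          by rewrite -{1}(prednK p0) mulSn addnC.
        rewrite mulrnDr e.
        rewrite opprD addrACA -[RHS]addrA; congr (_ + _); by rewrite addrCA addKr.
      - by move=> a Aa; exists a, 0%N; split; [exact: AM|rewrite mulr0n addr0].
      - move=> z Bz tz; apply: NNPP => nz; apply: hn; exists z; split => //.
    have [/dvdnP [q ej]|ndj] := boolP (p %| j)%N.
      exfalso; apply: nu; apply: tfM => //; rewrite ej.
      by apply: sgD => //; rewrite mulnC mulrnA hw'; apply: sgMn.
    have cop : coprime p j by rewrite prime_coprime.
    have [a _] := Bezoutl j p0; rewrite (eqP cop) => /dvdnP [c hc].
    have -> : w' = (w' *+ p) *+ c - (m0 + w' *+ j - m0) *+ a.
      by rewrite -mulrnA mulnC -hc addrAC subrr add0r -mulrnA mulnC mulrnDr mulr1n addrK.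
    apply: sgB => //; apply: sgMn => //; rewrite ?hw'; first exact: MS.
    by apply: sgB => //; [exact: TS | exact: MS].
  have -> : w = w' + s' by rewrite subrK.
  by apply: (sgD sgS) => //; exact: TS.
have pureS n w : (0 < n)%N -> S (w *+ n) -> S w.
  elim/ltn_ind: n w => n IH w n0 Swn.
  have [n1|n1] := leqP n 1%N.
    have en : n = 1%N by apply/eqP; rewrite eqn_leq n1.
    by rewrite en mulr1n in Swn.
  have pp := pdiv_prime n1; have pd := pdiv_dvd n.
  have pg1 : (1 < pdiv n)%N by apply: prime_gt1.
  apply: (IH (n %/ pdiv n)%N); first by rewrite ltn_Pdiv // ltnW.
    by rewrite divn_gt0 ?prime_gt0 // dvdn_leq // ltnW.
  by apply: (pureP _ (pdiv n)) => //; rewrite -mulrnA divnK.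
have ST : S = setT.
  apply: Amin => //; last by move=> a Aa; apply: MS; apply: AM.
  move=> z n n0 Sz; have [w _ hw] := Vdiv n0 (I : setT z).
  by exists w => //; apply: (pureS n) => //; rewrite hw.
have MT : M = setT.
  apply: Amin => //.
  move=> z n n0 Mz; have [w _ hw] := Vdiv n0 (I : setT z).
  have : S w by rewrite ST.
  move=> [m1 [s1 [Mm1 ts1 ew]]].
  have e0 : s1 *+ n = 0.
    apply: tfM; last exact: torMn.
    have -> : s1 *+ n = z - m1 *+ n by rewrite -hw ew mulrnDl addrC addKr.
    by apply: sgB => //; apply: sgMn.
  by exists m1 => //; rewrite -hw ew mulrnDl e0 addr0.
move=> x n n0 hx; apply: tfM; first by rewrite MT.
by exists n.
Qed.

End TF.

Theorem corollary9 (G Gs : topologicalZmodType) (iota : G -> Gs) :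
  LCA G -> torsion_free G -> minimal_divisible_extension iota ->
  iota @` Gop G `<=` Gop Gs.
Proof.
move=> _ tfG [_ [iD [iinj [icont [_ [Gsdiv Gsmin]]]]]].
have i0 : iota 0 = 0.
  by have := iD 0 0; rewrite addr0 => h; apply: (addrI (iota 0)); rewrite addr0 -h.
have iN x : iota (- x) = - iota x.
  by apply/eqP; rewrite -subr_eq0 opprK -iD addNr i0.
have iB x y : iota (x - y) = iota x - iota y by rewrite iD iN.
have iMn x n : iota (x *+ n) = iota x *+ n.
  by elim: n => [|n IH]; rewrite ?mulr0n ?i0 // !mulrS iD IH.
have tfGs : torsion_free Gs.
  apply: (@tfV _ (iota @` setT)) => //.
  - move=> _ [g _ <-] [n n0 hn]; rewrite -iMn -i0 in hn.
    by rewrite (tfG g n n0 (iinj _ _ hn)) i0.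
  - split; first by exists 0 => //.
    by move=> _ _ [x _ <-] [y _ <-]; exists (x - y) => //; rewrite iB.
move=> _ [x Gx <-] H oH pH.
have [sgH pH'] := pH.
pose K := iota @^-1` H.
apply: (Gx K).
  by move/continuousP: icont; apply.
split.
  split; first by rewrite /K /= i0; apply: sg0.
  by move=> a b Ka Kb; rewrite /K /= iB; apply: sgB.
move=> n n0; apply/seteqP; split.
  move=> _ [h Kh <-]; split; last by exists h.
  by rewrite /K /= iMn; apply: sgMn.
move=> z [Kg [y _ ey]]; subst z.
have : (H `&` [set g *+ n | g in [set: Gs]]) (iota (y *+ n)).
  by split; [exact: Kg | exists (iota y) => //; rewrite iMn].
rewrite -(pH' n n0) => -[h Hh eh].
exists y => //; rewrite /K /=.
have -> : iota y = h => //.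
apply/eqP; rewrite eq_sym -subr_eq0; apply/eqP; apply: (tfGs _ n n0).
by rewrite mulrnBl eh iMn subrr.
Qed.
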